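(* Let $k\ge0$, $n,q\ge1$, $\mathcal{X}\subset\mathbb{R}^n$ open, and let $\Psi\in C^0(\mathcal{X},\mathbb{R}^q)$ if $k=0$, or $\Psi\in C^k_b(\mathcal{X},\mathbb{R}^q)$ if $k\ge1$, be globally Lipschitz continuous with constant $K_\Psi\in[0,\infty)$ (w.r.t. $\|\cdot\|_\infty$). Fix $K\in[0,\infty)$, $\tau\in(0,T]$ and $w,\tilde w\in(0,\infty)$ with $$K\tau\ \ge\ 2\Big(1+\frac{K_\Psi}{w\tilde w}\Big).$$ Then, with $m=\max\{n,q\}$, there exists a (non-augmented) neural DDE $\Phi\in\mathrm{NDDE}^k_\tau(\mathcal{X},\mathbb{R}^q)$ with $\Phi(x)=\Psi(x)$ for all $x\in\mathcal{X}$, such that its vector field $F:\mathbb{R}\times\Omega_y\to\mathbb{R}^m$ is globally Lipschitz continuous in the second variable on $\mathbb{R}\times\Omega_0$ with Lipschitz constant $K$, where $\Omega_0=\{c_{\lambda(x)}:x\in\mathcal{X}\}\subset\Omega_y$, and its weight matrices satisfy $\|W\|_\infty=w$ and $\|\tilde W\|_\infty=\tilde w$.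
   Context: Throughout, $\|\cdot\|_\infty$ denotes the max-norm on $\mathbb{R}^d$ and, for a matrix $A\in\mathbb{R}^{r\times s}$, the induced norm $\|A\|_\infty=\max_{\|x\|_\infty=1}\|Ax\|_\infty$. Fix $T>0$, a delay $\tau\in[0,T]$ and $m\ge1$, and let $\mathcal{C}=C^0([-\tau,0],\mathbb{R}^m)$ with norm $\|u\|_\infty=\sup_{s\in[-\tau,0]}\|u(s)\|_\infty$. For a function $y$ defined on $[t-\tau,t]$, $y_t\in\mathcal{C}$ is $y_t(s)=y(t+s)$. For $a\in\mathbb{R}^m$, $c_a\in\mathcal{C}$ is the constant function $c_a(s)=a$. Given $F:\Omega\to\mathbb{R}^m$, $\Omega\subset\mathbb{R}\times\mathcal{C}$ open, and $(t_0,u)\in\Omega$, a solution of the DDE $\frac{dy}{dt}=F(t,y_t)$ ($t\ge t_0$), $y_{t_0}=u$, is a continuous $y:[t_0-\tau,t_0+c)\to\mathbb{R}^m$, $c\in(0,\infty]$, with $y_{t_0}=u$, $(t,y_t)\in\Omega$ and $y'(t)=F(t,y_t)$ for $t\in[t_0,t_0+c)$; it is denoted $y(t_0,u)$. $\mathcal{I}_a$ denotes the maximal interval of existence of $y(0,c_a)$. For $k\ge1$, $C^{0,k}_b(\Omega,\mathbb{R}^m)$ denotes the continuous maps $F$ on $\Omega$ that are $k$ times continuously Fréchet differentiable in the second variable with the derivatives of orders $1,\dots,k$ bounded on $\Omega$. Neural DDE: let $n,q\ge1$, $\mathcal{X}\subset\mathbb{R}^n$ open, $\lambda(x)=Wx+b$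 with $W\in\mathbb{R}^{m\times n}$, $b\in\mathbb{R}^m$, $\tilde\lambda(y)=\tilde Wy+\tilde b$ with $\tilde W\in\mathbb{R}^{q\times m}$, $\tilde b\in\mathbb{R}^q$, and $F:\Omega_t\times\Omega_y\to\mathbb{R}^m$ with $\Omega_t\subset\mathbb{R}$, $\Omega_y\subset\mathcal{C}$ open, satisfying the well-definedness conditions: $[0,T]\subset\Omega_t$, $\Omega_0:=\{c_{\lambda(x)}:x\in\mathcal{X}\}\subset\Omega_y$, and $[-\tau,T]\subset\mathcal{I}_{\lambda(x)}$ for all $x\in\mathcal{X}$. The associated neural DDE is $\Phi:\mathcal{X}\to\mathbb{R}^q$, $\Phi(x)=\tilde\lambda(y(0,c_{\lambda(x)})(T))$. For $k\ge1$, $\mathrm{NDDE}^k_\tau(\mathcal{X},\mathbb{R}^q)$ is the set of all such $\Phi$ with $F\in C^{0,k}_b(\Omega_t\times\Omega_y,\mathbb{R}^m)$; $\mathrm{NDDE}^0_\tau(\mathcal{X},\mathbb{R}^q)$ is the set of all such $\Phi$ for which the solutions $y(0,c_{\lambda(x)})$ are unique and continuous (and $\Phi$ is continuous). $\Phi$ is non-augmented if $m\le\max\{n,q\}$ and augmented if $m>\max\{n,q\}$. $C^k_b(\mathcal{X},\mathbb{R}^q)$ denotes the $k$ times continuously differentiable maps whose derivatives of orders $1,\dots,k$ are bounded on $\mathcal{X}$. A map $F:\Omega_t\times\Omega_y\to\mathbb{R}^m$ is globally Lipschitz continuous in the second variable on $\Omega_t\times\Omega_0$ with constant $K$ if $\|F(t,u)-F(t,v)\|_\infty\le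 K\|u-v\|_\infty$ for all $t\in\Omega_t$ and $u,v\in\Omega_0$. *)

(* Defs.v *)
From HB Require Import structures.
From mathcomp Require Import all_boot all_order all_algebra.
From mathcomp Require Import all_classical all_reals all_analysis.
Import Order.TTheory GRing.Theory Num.Theory.
Import numFieldNormedType.Exports.
Local Open Scope ring_scope.
Local Open Scope classical_set_scope.

Set Implicit Arguments.
Unset Strict Implicit.
Unset Printing Implicit Defensive.

(* Vectors of R^d are column vectors 'cV[R]_d; the library norm `|x|  *)
(* on matrices is the max-norm  max_i |x_i|, i.e. ||.||_oo.            *)

Definition induced_norm_is (R : realType) (r s : nat) (A : 'M[R]_(r, s)) (c : R)
  : Prop :=
  (forall x : 'cV[R]_s, `|x| = 1 -> `|A *m x| <= c) /\
  (exists x : 'cV[R]_s, `|x| = 1 /\ `|A *m x| = c).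

(* The phase space C = C^0([-tau,0], R^m).  An element is represented  *)
(* by a function u : R -> R^m that is continuous and satisfies         *)
(* u s = u (clamp s), i.e. it is constant outside [-tau,0]; this is a  *)
(* canonical (bijective) representation of C^0([-tau,0],R^m).          *)

Definition clamp (R : realType) (tau s : R) : R := Num.min 0 (Num.max (- tau) s).

Definition phase (R : realType) (m : nat) (tau : R) (u : R -> 'cV[R]_m) : Prop :=
  continuous u /\ (forall s, u s = u (clamp tau s)).

Definition supn (R : realType) (m : nat) (tau : R) (u : R -> 'cV[R]_m) : R :=
  sup [set `|u s| | s in [set s : R | - tau <= s <= 0]].

Definition seg (R : realType) (m : nat) (tau : R) (y : R -> 'cV[R]_m) (t : R)
  : R -> 'cV[R]_m := fun s => y (t + clamp tau s).

(* the constant function c_a is the library's  cst a  (= fun _ => a) *)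

(* Generic Frechet calculus (in a second variable) on a normed space   *)
(* given by a carrier V, an admissibility predicate adm (the subspace  *)
(* actually considered) and a norm nV.  The j-th derivative at (t,u)   *)
(* is represented as a map D j t u : seq V -> W, read on lists of      *)
(* length j (a j-linear map).                                          *)

Section Frechet.
Variables (R : realType) (V : lmodType R) (W : normedModType R).
Variables (adm : V -> Prop) (nV : V -> R).

Definition all_adm (hs : seq V) : Prop := forall h, h \in hs -> adm h.
Definition all_unit (hs : seq V) : Prop := forall h, h \in hs -> nV h <= 1.

Definition bounded_multilinear (j : nat) (L : seq V -> W) : Prop :=
  (forall (hs1 hs2 : seq V) (a : R) (u v : V),
      (size hs1 + size hs2).+1 = j -> all_adm hs1 -> all_adm hs2 -> adm u -> adm v ->
      L (hs1 ++ (a *: u + v) :: hs2) = a *: L (hs1 ++ u :: hs2) + L (hs1 ++ v :: hs2)) /\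
  (exists C : R, forall hs, size hs = j -> all_adm hs ->
      `|L hs| <= C * \prod_(h <- hs) nV h).

(* F : R x V -> W on Omega_t x Omega_y is in C^{0,k}_b: continuous,
   k times continuously Frechet differentiable in the second variable
   (derivatives jointly continuous in (t,u), in operator norm), with
   derivatives of orders 1..k bounded on Omega_t x Omega_y. *)
Definition C0kb (k : nat) (Ot : set R) (Oy : set V) (F : R -> V -> W) : Prop :=
  (forall t u, Ot t -> Oy u -> forall e : R, 0 < e -> exists d : R, 0 < d /\
     forall t' u', Ot t' -> Oy u' -> `|t' - t| < d -> nV (u' - u) < d ->
       `|F t' u' - F t u| <= e) /\
  exists D : nat -> R -> V -> seq V -> W,
    (forall t u, Ot t -> Oy u -> D 0%N t u [::] = F t u) /\
    (forall j t u, (j <= k)%N -> Ot t -> Oy u -> bounded_multilinear j (D j t u)) /\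
    (forall j t u, (j < k)%N -> Ot t -> Oy u ->
       forall e : R, 0 < e -> exists d : R, 0 < d /\
       forall h, adm h -> nV h < d -> Oy (u + h) ->
       forall hs, size hs = j -> all_adm hs -> all_unit hs ->
         `|D j t (u + h) hs - D j t u hs - D j.+1 t u (h :: hs)| <= e * nV h) /\
    (forall j t u, (1 <= j <= k)%N -> Ot t -> Oy u ->
       forall e : R, 0 < e -> exists d : R, 0 < d /\
       forall t' u', Ot t' -> Oy u' -> `|t' - t| < d -> nV (u' - u) < d ->
       forall hs, size hs = j -> all_adm hs -> all_unit hs ->
         `|D j t' u' hs - D j t u hs| <= e) /\
    (exists C : R, forall j t u, (1 <= j <= k)%N -> Ot t -> Oy u ->
       forall hs, size hs = j -> all_adm hs -> all_unit hs -> `|D j t u hs| <= C).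

Definition open_in_adm (O : set V) : Prop :=
  (forall u, O u -> adm u) /\
  forall u, O u -> exists e : R, 0 < e /\ forall v, adm v -> nV (v - u) < e -> O v.

End Frechet.

Definition Ckb (R : realType) (n q : nat) (k : nat) (X : set 'cV[R]_n)
  (Psi : 'cV[R]_n -> 'cV[R]_q) : Prop :=
  C0kb (fun _ => True) (fun x : 'cV[R]_n => `|x|) k setT X (fun _ x => Psi x).

Definition has_deriv_within (R : realType) (m : nat) (D : set R)
  (y : R -> 'cV[R]_m) (t : R) (v : 'cV[R]_m) : Prop :=
  forall e : R, 0 < e -> exists d : R, 0 < d /\
    forall h : R, h != 0 -> `|h| < d -> D (t + h) ->
      `|h^-1 *: (y (t + h) - y t) - v| <= e.

Definition dde_solution (R : realType) (m : nat) (tau : R)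
  (Ot : set R) (Oy : set (R -> 'cV[R]_m)) (F : R -> (R -> 'cV[R]_m) -> 'cV[R]_m)
  (t0 : R) (u : R -> 'cV[R]_m) (c : R) (y : R -> 'cV[R]_m) : Prop :=
  0 < c /\
  {within [set s | t0 - tau <= s < t0 + c], continuous y} /\
  (forall s, - tau <= s <= 0 -> y (t0 + s) = u s) /\
  (forall t, t0 <= t < t0 + c ->
     Ot t /\ Oy (seg tau y t) /\
     has_deriv_within [set s | t0 <= s < t0 + c] y t (F t (seg tau y t))).

Definition is_NDDE (R : realType) (n q m : nat) (k : nat) (tau T : R)
  (X : set 'cV[R]_n)
  (Ot : set R) (Oy : set (R -> 'cV[R]_m)) (F : R -> (R -> 'cV[R]_m) -> 'cV[R]_m)
  (W : 'M[R]_(m, n)) (b : 'cV[R]_m) (Wt : 'M[R]_(q, m)) (bt : 'cV[R]_q)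
  (Phi : 'cV[R]_n -> 'cV[R]_q) : Prop :=
  let lam := fun x => W *m x + b in
  open Ot /\ open_in_adm (phase tau) (supn tau) Oy /\
  (forall t, 0 <= t <= T -> Ot t) /\
  (forall x, X x -> Oy (cst (lam x))) /\
  (forall x, X x ->
     (* [-tau, T] is contained in the maximal interval of existence *)
     (exists c y, T < c /\ dde_solution tau Ot Oy F 0 (cst (lam x)) c y) /\
     (forall c1 c2 y1 y2,
        dde_solution tau Ot Oy F 0 (cst (lam x)) c1 y1 ->
        dde_solution tau Ot Oy F 0 (cst (lam x)) c2 y2 ->
        forall s, - tau <= s -> s < c1 -> s < c2 -> y1 s = y2 s) /\
     (forall c y, T < c -> dde_solution tau Ot Oy F 0 (cst (lam x)) c y ->
        Phi x = Wt *m y T + bt)) /\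
  (if k is 0%N then {within X, continuous Phi}
   else C0kb (phase tau) (supn tau) k Ot Oy F).

(* Main.v *)
Require Import Defs.
From HB Require Import structures.
From mathcomp Require Import all_boot all_order all_algebra.
From mathcomp Require Import all_classical all_reals all_analysis.
From mathcomp Require Import ring lra.
Import Order.TTheory GRing.Theory Num.Theory.
Import numFieldNormedType.Exports.
Local Open Scope ring_scope.
Local Open Scope classical_set_scope.


Section L1.
Variable R : realType.
Lemma deriv0_of_eps (g : R -> R) (x : R) :
  (forall e, 0 < e -> exists d, 0 < d /\ forall h, h != 0 -> `|h| < d ->
      `|g (x + h) - g x| <= e * `|h|) ->
  is_derive x (1:R) g 0.
Proof.
move=> H.
have cv : (fun h => h^-1 *: ((g \o shift x) (h *: 1) - g x)) @ 0^' --> (0:R).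
  apply/cvgrPdist_le => e e0.
  have [d [d0 Hd]] := H e e0.
  rewrite near_withinE; apply/nbhs_normP; exists d => //= t.
  rewrite /ball_ /= sub0r normrN => tlt tne0.
  rewrite sub0r normrN [t%:A]mulr1 addrC.
  have -> : forall u : R, t^-1 *: u = t^-1 * u by [].
  rewrite normrM normfV.
  rewrite ler_pdivrMl ?normr_gt0 // mulrC.
  by rewrite addrC (addrC t); exact: Hd.
apply: DeriveDef; first exact: (cvgP _ cv).
exact: cvg_lim cv.
Qed.
Definition cl (a b s : R) := Num.min b (Num.max a s).

Lemma nle_helper (x y : R) : (0 <= y -> -y <= x <= y) -> (y < 0 -> y <= x <= -y) -> `|x| <= `|y|.
Proof.
move=> h1 h2; case: (lerP 0 y) => hy.
  by rewrite (ger0_norm hy) ler_norml; apply: h1.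
by rewrite (ltr0_norm hy) ler_norml opprK; move: (h2 hy) => /andP[? ?]; apply/andP; split.
Qed.

Lemma cl_cases a b s : a <= b ->
  (s <= a /\ cl a b s = a) \/ (a <= s <= b /\ cl a b s = s) \/ (b <= s /\ cl a b s = b).
Proof.
move=> ab; rewrite /cl; case: (leP a s) => h1.
  case: (leP b s) => h2.
    by right; right; split.
  by right; left; split => //; apply/andP; split => //; apply: ltW.
left; case: (leP b a) => h2; split; try apply: ltW => //; apply/eqP; rewrite eq_le; apply/andP; split => //; exact: ltW.
Qed.

Lemma cl_in a b s : a <= b -> a <= cl a b s <= b.
Proof. move=> ab; case: (cl_cases a b s ab) => [[h ->]|[[h ->]|[h ->]]]; lra. Qed.

Lemma cl_id a b s : a <= s <= b -> cl a b s = s.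
Proof. move=> /andP[h1 h2]; have ab : a <= b by lra.
case: (cl_cases a b s ab) => [[h ->]|[[h ->]|[h ->]]]; lra. Qed.

Lemma cl_lip a b s s' : a <= b -> `|cl a b s - cl a b s'| <= `|s - s'|.
Proof.
move=> ab; apply: nle_helper => h;
case: (cl_cases a b s ab) => [[h1 ->]|[[h1 ->]|[h1 ->]]];
case: (cl_cases a b s' ab) => [[h2 ->]|[[h2 ->]|[h2 ->]]]; lra.
Qed.
Lemma entry_le (r c : nat) (M : 'M[R]_(r,c)) i j : `|M i j| <= `|M|.
Proof.
have -> : `|M| = mx_norm M by [].
rewrite mx_normrE. exact: (le_bigmax _ _ (i,j)).
Qed.
Lemma norm_le (r c : nat) (M : 'M[R]_(r,c)) (x : R) : 0 <= x -> (forall i j, `|M i j| <= x) -> `|M| <= x.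
Proof.
move=> x0 H; have -> : `|M| = mx_norm M by [].
rewrite mx_normrE; apply: bigmax_le => // [[i j]] _; exact: H.
Qed.

Lemma const_R (f : R -> R) (a b : R) : a <= b ->
  (forall t, a <= t <= b -> forall e, 0 < e -> exists d, 0 < d /\
     forall t', a <= t' <= b -> `|t' - t| < d -> `|f t' - f t| <= e * `|t' - t|) ->
  f b = f a.
Proof.
move=> ab H.
have D : forall x, is_derive x (1:R) (f \o cl a b) 0.
  move=> x; apply: deriv0_of_eps => e e0.
  have [d [d0 Hd]] := H (cl a b x) (cl_in _ _ x ab) e e0.
  exists d; split => // h hn0 hd.
  have L := cl_lip _ _ (x+h) x ab.
  rewrite addrAC subrr add0r in L.
  apply: le_trans (Hd _ (cl_in _ _ _ ab) _) _.
    exact: le_lt_trans L hd.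
  by apply: ler_wpM2l => //; apply: ltW.
have := is_derive_0_is_cst b a D.
by rewrite /= !cl_id //; apply/andP; split.
Qed.

Lemma const_M (r c : nat) (f : R -> 'M[R]_(r,c)) (a b : R) : a <= b ->
  (forall t, a <= t <= b -> forall e, 0 < e -> exists d, 0 < d /\
     forall t', a <= t' <= b -> `|t' - t| < d -> `|f t' - f t| <= e * `|t' - t|) ->
  f b = f a.
Proof.
move=> ab H; apply/matrixP => i j.
apply: (const_R (fun s => f s i j)) => // t ht e e0.
have [d [d0 Hd]] := H t ht e e0; exists d; split => // t' ht' hd.
apply: le_trans (Hd t' ht' hd).
have := entry_le _ _ (f t' - f t) i j; by rewrite !mxE.
Qed.

Lemma cont_of_eps (V : normedModType R) (f : R -> V) :
  (forall x e, 0 < e -> exists d, 0 < d /\ forall y, `|y - x| < d -> `|f y - f x| <= e) ->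
  continuous f.
Proof.
move=> H x; apply/cvgrPdist_le => e e0.
have [d [d0 Hd]] := H x e e0.
apply/nbhs_normP; exists d => //= y; rewrite /ball_ /= => hy.
by rewrite -normrN opprB; apply: Hd; rewrite -normrN opprB.
Qed.

End L1.
Arguments cl {R}.
Arguments cl_cases {R}.
Arguments cl_in {R}.
Arguments cl_id {R}.
Arguments cl_lip {R}.
Arguments nle_helper {R}.
Arguments entry_le {R r c}.
Arguments norm_le {R r c}.
Arguments const_R {R}.
Arguments const_M {R r c}.
Arguments cont_of_eps {R V}.
Arguments deriv0_of_eps {R}.

Section L2.
Variable R : realType.

Definition E (r s : nat) : 'M[R]_(r, s) := \matrix_(i, j) ((i : nat) == j)%:R.

Lemma E_entry r s (v : 'cV[R]_s) (i : 'I_r) (k : 'I_s) :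
  (i : nat) = k -> (E r s *m v) i 0 = v k 0.
Proof.
move=> ik; rewrite mxE (bigD1 k) //= mxE ik eqxx mul1r big1 ?addr0 // => k' hk'.
rewrite mxE ik; case: eqP => [e|]; last by rewrite mul0r.
by move: hk'; rewrite (val_inj e) eqxx.
Qed.

Lemma E_entry0 r s (v : 'cV[R]_s) (i : 'I_r) :
  (s <= i)%N -> (E r s *m v) i 0 = 0.
Proof.
move=> si; rewrite mxE big1 // => k _; rewrite mxE.
case: eqP => [e|]; last by rewrite mul0r.
by move: (ltn_ord k); rewrite -e ltnNge si.
Qed.

Lemma E_norm_le r s (v : 'cV[R]_s) : `|E r s *m v| <= `|v|.
Proof.
apply: norm_le => // i j; rewrite (ord1 j).
case: (ltnP i s) => h.
  by rewrite (E_entry _ _ v i (Ordinal h)) //; apply: entry_le.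
by rewrite E_entry0 // normr0.
Qed.

Lemma E_norm_eq r s (v : 'cV[R]_s) : (s <= r)%N -> `|E r s *m v| = `|v|.
Proof.
move=> sr; apply/eqP; rewrite eq_le E_norm_le /=.
apply: norm_le => // i j; rewrite (ord1 j).
have h : (i < r)%N by apply: leq_trans (ltn_ord i) sr.
rewrite -(E_entry _ _ v (Ordinal h) i) //; apply: entry_le.
Qed.

Lemma E_comp r s (v : 'cV[R]_s) : (s <= r)%N -> E s r *m (E r s *m v) = v.
Proof.
move=> sr; apply/matrixP => i j; rewrite (ord1 j).
have h : (i < r)%N by apply: leq_trans (ltn_ord i) sr.
by rewrite (E_entry _ _ _ i (Ordinal h)) // (E_entry _ _ v (Ordinal h) i).
Qed.

Lemma E_const r s : (r <= s)%N -> E r s *m (const_mx 1 : 'cV[R]_s) = (const_mx 1 : 'cV[R]_r).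
Proof.
move=> rs; apply/matrixP => i j; rewrite (ord1 j).
have h : (i < s)%N by apply: leq_trans (ltn_ord i) rs.
by rewrite (E_entry _ _ _ i (Ordinal h)) // !mxE.
Qed.

Lemma norm_const1 p : (0 < p)%N -> `|(const_mx 1 : 'cV[R]_p)| = 1.
Proof.
move=> p0; apply/eqP; rewrite eq_le; apply/andP; split.
  by apply: norm_le => // i j; rewrite mxE normr1.
by have := @entry_le R p 1 (const_mx 1) (Ordinal p0) 0; rewrite mxE normr1.
Qed.

End L2.
Arguments E {R}.
Arguments E_entry {R r s}.
Arguments E_entry0 {R r s}.
Arguments E_norm_le {R r s}.
Arguments E_norm_eq {R r s}.
Arguments E_comp {R r s}.
Arguments E_const {R}.
Arguments norm_const1 {R}.

Section L3.
Variable R : realType.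

Lemma supn_ge (m : nat) (tau : R) (u : R -> 'cV[R]_m) s :
  continuous u -> - tau <= s <= 0 -> `|u s| <= supn tau u.
Proof.
move=> cu hs.
have tau0 : - tau <= 0 by case/andP: hs => h1 h2; lra.
have cf : {within `[- tau, 0], continuous (fun s => `|u s|)}.
  apply: continuous_subspaceT => x.
  exact: (continuous_comp (cu x) (@norm_continuous _ _ (u x))).
have [c hc Hc] := EVT_max tau0 cf.
apply: ub_le_sup.
  exists `|u c| => _ [s' hs' <-]; apply: Hc; rewrite in_itv /=; exact: hs'.
by exists s.
Qed.

Lemma supn_ge0 (m : nat) (tau : R) (u : R -> 'cV[R]_m) :
  continuous u -> 0 <= tau -> 0 <= supn tau u.
Proof.
move=> cu t0; apply: le_trans (supn_ge _ tau u 0 cu _) => //.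
by apply/andP; split; lra.
Qed.

End L3.
Arguments supn_ge {R m}.
Arguments supn_ge0 {R m}.

Section L4.
Variable R : realType.
Variables (al L : R).
Hypothesis L0 : 0 < L.

Definition rr (t : R) := cl 0 L (t - al).
Definition hh (t : R) := rr t * (L - rr t).
Definition HH (t : R) := L * rr t ^+ 2 / 2 - rr t ^+ 3 / 3.

Lemma L0' : (0 : R) <= L. Proof. exact: ltW. Qed.

Lemma Qrem (r r' : R) : 0 <= r <= L -> 0 <= r' <= L ->
  `|(L * r' ^+ 2 / 2 - r' ^+ 3 / 3) - (L * r ^+ 2 / 2 - r ^+ 3 / 3) - (r' - r) * (r * (L - r))|
    <= L * (r' - r) ^+ 2.
Proof.
move=> /andP[h1 h2] /andP[h3 h4].
have -> : (L * r' ^+ 2 / 2 - r' ^+ 3 / 3) - (L * r ^+ 2 / 2 - r ^+ 3 / 3) - (r' - r) * (r * (L - r))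
  = (r' - r) ^+ 2 * (L / 2 - r - (r' - r) / 3) by rewrite !expr2 !exprS !expr0; field.
rewrite normrM ger0_norm ?sqr_ge0 // mulrC; apply: ler_wpM2r; first exact: sqr_ge0.
rewrite ler_norml; apply/andP; split; lra.
Qed.

Lemma prod_help (X Y D : R) : 0 <= X <= D -> 0 <= Y <= L * D -> X * Y <= L * (D * D).
Proof.
move=> /andP[h1 h2] /andP[h3 h4].
apply: (le_trans (y := D * Y)); first by apply: ler_wpM2r.
rewrite mulrCA; apply: ler_wpM2l => //; lra.
Qed.

Lemma crossrem t d : `|(rr (t + d) - rr t - d) * hh t| <= L * d ^+ 2.
Proof.
have hL : 0 <= L * (d * d) by apply: mulr_ge0; [exact: L0'|rewrite -expr2; exact: sqr_ge0].
rewrite /hh /rr !expr2.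
case: (cl_cases 0 L (t - al) L0') => [[h2 ->]|[[h2 ->]|[h2 ->]]].
- by rewrite mul0r mulr0 normr0.
- have ha : 0 <= t - al by case/andP: h2.
  have hb : t - al <= L by case/andP: h2.
  case: (cl_cases 0 L (t + d - al) L0') => [[h1 ->]|[[h1 ->]|[h1 ->]]].
  + rewrite normrM (ger0_norm (x := (t - al) * (L - (t - al)))); last by apply: mulr_ge0; lra.
    have -> : `|0 - (t - al) - d| = - (t + d - al) by rewrite ger0_norm; lra.
    have -> : d * d = (- d) * (- d) by rewrite mulrNN.
    apply: prod_help; apply/andP; split; try lra.
      by apply: mulr_ge0; lra.
    nra.
  + have -> : t + d - al - (t - al) - d = 0 by ring.
    by rewrite mul0r normr0.
  + rewrite normrM (ger0_norm (x := (t - al) * (L - (t - al)))); last by apply: mulr_ge0; lra.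
    have -> : `|L - (t - al) - d| = t + d - al - L by rewrite ler0_norm; lra.
    apply: prod_help; apply/andP; split; try lra.
      by apply: mulr_ge0; lra.
    nra.
- by rewrite subrr !mulr0 normr0.
Qed.

Lemma H_taylor t d : `|HH (t + d) - HH t - d * hh t| <= 2 * L * d ^+ 2.
Proof.
have h1 := Qrem _ _ (cl_in 0 L (t - al) L0') (cl_in 0 L (t + d - al) L0').
have h2 := crossrem t d.
have h3 := cl_lip 0 L (t + d - al) (t - al) L0'.
rewrite (_ : t + d - al - (t - al) = d) in h3; last by ring.
have h4 : (rr (t + d) - rr t) ^+ 2 <= d ^+ 2.
  rewrite -(real_normK (num_real (rr (t + d) - rr t))) -(real_normK (num_real d)).
  by apply: lerXn2r; rewrite ?nnegrE ?normr_ge0.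
rewrite /HH /hh.
have -> : (L * rr (t + d) ^+ 2 / 2 - rr (t + d) ^+ 3 / 3) - (L * rr t ^+ 2 / 2 - rr t ^+ 3 / 3) -
   d * (rr t * (L - rr t)) =
   ((L * rr (t + d) ^+ 2 / 2 - rr (t + d) ^+ 3 / 3) - (L * rr t ^+ 2 / 2 - rr t ^+ 3 / 3) -
   (rr (t + d) - rr t) * (rr t * (L - rr t))) + (rr (t + d) - rr t - d) * (rr t * (L - rr t))
   by ring.
apply: le_trans (ler_normD _ _) _.
rewrite -/(hh t) /rr.
have : L * (rr (t + d) - rr t) ^+ 2 <= L * d ^+ 2 by apply: ler_wpM2l; [exact: L0'|].
rewrite /rr => h5.
lra.
Qed.

Lemma rr_in t : 0 <= rr t <= L.
Proof. exact: (cl_in 0 L (t - al) L0'). Qed.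

Lemma hh_bound t : 0 <= hh t <= L ^+ 2 / 4.
Proof.
have /andP[h1 h2] := rr_in t; rewrite /hh; apply/andP; split.
  by apply: mulr_ge0; lra.
have := sqr_ge0 (L / 2 - rr t); rewrite !expr2 => ?; nra.
Qed.

Lemma rr_le t : t <= al -> rr t = 0.
Proof.
move=> h; rewrite /rr; case: (cl_cases 0 L (t - al) L0') => [[h1 ->]|[[h1 ->]|[h1 ->]]] //.
  by case/andP: h1 => ? ?; apply/eqP; rewrite eq_le; apply/andP; split; lra.
move: L0 h h1 => a b c. have : (0:R) < 0 by lra.
by rewrite ltxx.
Qed.

Lemma rr_ge t : al + L <= t -> rr t = L.
Proof.
move=> h; rewrite /rr; case: (cl_cases 0 L (t - al) L0') => [[h1 ->]|[[h1 ->]|[h1 ->]]] //.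
  move: L0 h h1 => a b c. have : (0:R) < 0 by lra.
  by rewrite ltxx.
by case/andP: h1 => ? ?; apply/eqP; rewrite eq_le; apply/andP; split; lra.
Qed.

Lemma hh_le t : t <= al -> hh t = 0.
Proof. by move=> h; rewrite /hh rr_le // mul0r. Qed.

Lemma HH_le t : t <= al -> HH t = 0.
Proof. by move=> h; rewrite /HH rr_le // !expr0n /= !mulr0 !mul0r subrr. Qed.

Lemma hh_ge t : al + L <= t -> hh t = 0.
Proof. by move=> h; rewrite /hh rr_ge // subrr mulr0. Qed.

Lemma HH_end : HH (al + L) = L ^+ 3 / 6.
Proof. rewrite /HH rr_ge ?lexx // !expr2 !exprS !expr0; by field. Qed.

Lemma hh_lip t t' : `|hh t' - hh t| <= L * `|t' - t|.
Proof.
have /andP[h1 h2] := rr_in t; have /andP[h3 h4] := rr_in t'.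
have h5 := cl_lip 0 L (t' - al) (t - al) L0'.
rewrite (_ : t' - al - (t - al) = t' - t) in h5; last by ring.
rewrite /hh -/(rr t) -/(rr t').
have -> : rr t' * (L - rr t') - rr t * (L - rr t) = (rr t' - rr t) * (L - rr t' - rr t) by ring.
rewrite normrM mulrC; apply: ler_pM; rewrite ?normr_ge0 //.
rewrite ler_norml; apply/andP; split; lra.
Qed.

Lemma HH_lip t t' : `|HH t' - HH t| <= 2 * L ^+ 2 * `|t' - t|.
Proof.
have /andP[h1 h2] := rr_in t; have /andP[h3 h4] := rr_in t'.
have h5 := cl_lip 0 L (t' - al) (t - al) L0'.
rewrite (_ : t' - al - (t - al) = t' - t) in h5; last by ring.
rewrite /HH -/(rr t) -/(rr t') -/(rr t') in h5 *.
have -> : L * rr t' ^+ 2 / 2 - rr t' ^+ 3 / 3 - (L * rr t ^+ 2 / 2 - rr t ^+ 3 / 3) =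
  (rr t' - rr t) * (rr t * (L - rr t) + (rr t' - rr t) * (L / 2 - rr t - (rr t' - rr t) / 3)).
  by rewrite !expr2 !exprS !expr0; field.
rewrite normrM mulrC; apply: ler_pM; rewrite ?normr_ge0 //.
rewrite ler_norml !expr2; apply/andP; split; nra.
Qed.
End L4.
Arguments rr {R}.
Arguments hh {R}.
Arguments HH {R}.
Arguments H_taylor {R}.
Arguments hh_bound {R}.
Arguments rr_le {R}.
Arguments rr_ge {R}.
Arguments hh_le {R}.
Arguments HH_le {R}.
Arguments hh_ge {R}.
Arguments HH_end {R}.
Arguments hh_lip {R}.
Arguments HH_lip {R}.
Arguments rr_in {R}.

Section L5.
Variable R : realType.

Lemma lip_cont (V : normedModType R) (f : R -> V) (C : R) : 0 <= C ->
  (forall s t, `|f s - f t| <= C * `|s - t|) -> continuous f.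
Proof.
move=> C0 H; apply: cont_of_eps => x e e0.
exists (e / (C + 1)); split; first by apply: divr_gt0 => //; lra.
move=> y hy; apply: le_trans (H y x) _.
have C1 : 0 < C + 1 by lra.
apply: (le_trans (y := C * (e / (C + 1)))); first by apply: ler_wpM2l => //; apply: ltW.
rewrite mulrA ler_pdivrMr //; nra.
Qed.

Lemma open_ball (n : nat) (X : set 'cV[R]_n) x : open X -> X x ->
  exists r, 0 < r /\ forall y, `|y - x| < r -> X y.
Proof.
move=> oX Xx; have := oX x Xx; move=> /nbhs_normP [r r0 Hr].
exists r; split => // y hy; apply: Hr; rewrite /ball_ /= -normrN opprB //.
Qed.

Lemma deriv_lemma (m : nat) (a g : 'cV[R]_m) (H h : R -> R) (C : R) (D : set R) t :
  0 <= C -> (forall d, `|H (t + d) - H t - d * h t| <= C * d ^+ 2) ->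
  has_deriv_within D (fun s => a + H s *: g) t (h t *: g).
Proof.
move=> C0 HC e e0.
have g0 : 0 <= `|g| by [].
have Cg : 0 < C * `|g| + 1 by have := mulr_ge0 C0 g0; lra.
exists (e / (C * `|g| + 1)); split; first by apply: divr_gt0.
move=> d dn0 hd _.
have -> : d^-1 *: (a + H (t + d) *: g - (a + H t *: g)) - h t *: g =
   (d^-1 * (H (t + d) - H t - d * h t)) *: g.
  rewrite opprD addrACA subrr add0r -scalerBl scalerA -scalerBl; congr (_ *: _).
  by field.
rewrite normrZ normrM normfV.
have d0 : 0 < `|d| by rewrite normr_gt0.
apply: (le_trans (y := `|d|^-1 * (C * d ^+ 2) * `|g|)).
  by apply: ler_wpM2r => //; apply: ler_wpM2l => //; rewrite invr_ge0 ltW.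
have -> : `|d|^-1 * (C * d ^+ 2) * `|g| = `|d| * (C * `|g|).
  rewrite -real_normK ?num_real //; field; by rewrite gt_eqF.
apply: (le_trans (y := e / (C * `|g| + 1) * (C * `|g|))).
  by apply: ler_wpM2r; [apply: mulr_ge0|apply: ltW].
rewrite mulrAC ler_pdivrMr //; nra.
Qed.

Lemma diff_const (m : nat) (D : set R) (f g v : R -> 'cV[R]_m) (a b : R) : a <= b ->
  (forall s, a <= s <= b -> D s) ->
  (forall s, a <= s <= b -> has_deriv_within D f s (v s)) ->
  (forall s, a <= s <= b -> has_deriv_within D g s (v s)) ->
  f b - g b = f a - g a.
Proof.
move=> ab HD Hf Hg.
suff HH : (fun s => f s - g s) b = (fun s => f s - g s) a by exact: HH.
apply: (const_M (fun s => f s - g s) a b ab) => s hs e e0.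
have e2 : 0 < e / 2 by apply: divr_gt0.
have [d1 [d10 H1]] := Hf s hs _ e2.
have [d2 [d20 H2]] := Hg s hs _ e2.
exists (Num.min d1 d2); split; first by rewrite lt_min d10 d20.
move=> s' hs' hd.
have [->|ne] := eqVneq s' s; first by rewrite !subrr !normr0 mulr0.
have dn0 : s' - s != 0 by rewrite subr_eq0.
have hd1 : `|s' - s| < d1 by move: hd; rewrite lt_min => /andP[].
have hd2 : `|s' - s| < d2 by move: hd; rewrite lt_min => /andP[].
have ss : s + (s' - s) = s' by ring.
have Ds : D (s + (s' - s)) by rewrite ss; apply: HD.
have A := H1 _ dn0 hd1 Ds; have B := H2 _ dn0 hd2 Ds.
rewrite ss in A B.
have dd : 0 < `|s' - s| by rewrite normr_gt0.
have : `|(s' - s)^-1 *: (f s' - g s' - (f s - g s))| <= e.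
  have -> : (s' - s)^-1 *: (f s' - g s' - (f s - g s)) =
     ((s' - s)^-1 *: (f s' - f s) - v s) - ((s' - s)^-1 *: (g s' - g s) - v s).
    by apply/matrixP => i j; rewrite !mxE; ring.
  apply: le_trans (ler_normB _ _) _.
  by have := lerD A B; rewrite -splitr.
rewrite normrZ normfV ler_pdivrMl // mulrC //.
Qed.

End L5.
Arguments lip_cont {R V}.
Arguments open_ball {R n}.
Arguments deriv_lemma {R m}.
Arguments diff_const {R m}.

Section M.
Variables (R : realType) (n q : nat) (T : R) (X : set 'cV[R]_n)
  (Psi : 'cV[R]_n -> 'cV[R]_q) (KPsi K tau w wt : R).
Hypotheses (n0 : (0 < n)%N) (q0 : (0 < q)%N) (oX : open X)
  (KPsi0 : 0 <= KPsi)
  (LipPsi : forall x1 x2, X x1 -> X x2 -> `|Psi x1 - Psi x2| <= KPsi * `|x1 - x2|)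
  (K0 : 0 <= K) (tau0 : 0 < tau) (tauT : tau <= T) (w0 : 0 < w) (wt0 : 0 < wt)
  (Kc : 2 * (1 + KPsi / (w * wt)) <= K * tau).

Local Notation m := (maxn n q).

Definition Lp : R := 3 * tau / 4.
Definition al : R := T - Lp.
Definition HT : R := Lp ^+ 3 / 6.
Definition Pm (v : 'cV[R]_m) : 'cV[R]_n := w^-1 *: (E n m *m v).
Definition G (v : 'cV[R]_m) : 'cV[R]_m := HT^-1 *: (wt^-1 *: (E m q *m Psi (Pm v)) - v).
Definition Fv (t : R) (u : R -> 'cV[R]_m) : 'cV[R]_m := hh al Lp t *: G (u (- tau)).
Definition Wm : 'M[R]_(m, n) := w *: E m n.
Definition Wtm : 'M[R]_(q, m) := wt *: E q m.
Definition Oy (u : R -> 'cV[R]_m) : Prop := phase tau u /\ X (Pm (u (- tau))).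
Definition ysol (a : 'cV[R]_m) (t : R) : 'cV[R]_m := a + HH al Lp t *: G a.

Lemma Lp0 : 0 < Lp.
Proof. by rewrite /Lp; have := tau0; lra. Qed.

Lemma al_ge : tau / 4 <= al.
Proof. by rewrite /al /Lp; have := tau0; have := tauT; lra. Qed.

Lemma alLp : al + Lp = T.
Proof. by rewrite /al subrK. Qed.

Lemma HT0 : 0 < HT.
Proof. by rewrite /HT; apply: divr_gt0 => //; apply: exprn_gt0; exact: Lp0. Qed.

Lemma PmW x : Pm (Wm *m x) = x.
Proof.
rewrite /Pm /Wm -scalemxAl scalemxAr scalerA mulVf ?gt_eqF // scale1r.
by apply: E_comp; rewrite leq_maxl.
Qed.

Lemma clamp_m : clamp tau (- tau) = - tau.
Proof. by rewrite /clamp max_r // min_r // oppr_le0 ltW. Qed.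

Lemma seg_m (y : R -> 'cV[R]_m) t : seg tau y t (- tau) = y (t - tau).
Proof. by rewrite /seg clamp_m. Qed.

Lemma ysolT a : ysol a T = wt^-1 *: (E m q *m Psi (Pm a)).
Proof.
rewrite /ysol -alLp HH_end; last exact: Lp0.
rewrite -/HT /G scalerA mulfV ?gt_eqF ?HT0 // scale1r addrC subrK //.
Qed.

Lemma Phi_eq x : Wtm *m ysol (Wm *m x + 0) T + 0 = Psi x.
Proof.
rewrite !addr0 ysolT PmW /Wtm -scalemxAl scalemxAr scalerA mulfV ?gt_eqF // scale1r.
by apply: E_comp; rewrite leq_maxr.
Qed.

Lemma normW : induced_norm_is Wm w.
Proof.
split.
  move=> x x1; rewrite /Wm -scalemxAl normrZ E_norm_eq ?leq_maxl // x1 mulr1.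
  by rewrite ger0_norm // ltW.
exists (const_mx 1); rewrite norm_const1 //; split => //.
by rewrite /Wm -scalemxAl normrZ E_norm_eq ?leq_maxl // norm_const1 // mulr1 ger0_norm // ltW.
Qed.

Lemma normWt : induced_norm_is Wtm wt.
Proof.
have m0 : (0 < m)%N by rewrite leq_max n0.
split.
  move=> x x1; rewrite /Wtm -scalemxAl normrZ (ger0_norm (ltW wt0)).
  apply: (le_trans (y := wt * `|x|)); last by rewrite x1 mulr1.
  by apply: ler_wpM2l; [apply: ltW|apply: E_norm_le].
exists (const_mx 1); rewrite norm_const1 //; split => //.
by rewrite /Wtm -scalemxAl normrZ E_const ?leq_maxr // norm_const1 // mulr1 (ger0_norm (ltW wt0)).
Qed.


Lemma phase_cst (a : 'cV[R]_m) : phase tau (cst a).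
Proof. by split => // s; exact: cst_continuous. Qed.

Lemma supn_m (u : R -> 'cV[R]_m) : continuous u -> `|u (- tau)| <= supn tau u.
Proof.
move=> cu; apply: supn_ge cu _; apply/andP; split => //.
by rewrite oppr_le0 ltW.
Qed.

Lemma Pm_lip (v v' : 'cV[R]_m) : `|Pm v - Pm v'| <= w^-1 * `|v - v'|.
Proof.
rewrite /Pm -scalerBr -mulmxBr normrZ ger0_norm ?invr_ge0 ?(ltW w0) //.
by apply: ler_wpM2l; [rewrite invr_ge0 ltW|apply: E_norm_le].
Qed.

Lemma Oy_open : open_in_adm (phase tau) (supn tau) Oy.
Proof.
split; first by move=> u [].
move=> u [pu Xu]; have [r [r0 Hr]] := open_ball _ _ oX Xu.
exists (r * w); split; first exact: mulr_gt0.
move=> v pv hv; split => //; apply: Hr.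
apply: le_lt_trans (Pm_lip _ _) _.
have cvu : continuous (v - u) by move=> s; apply: continuousB; [exact: pv.1|exact: pu.1].
have := supn_m _ cvu => h1.
rewrite ltr_pdivrMl // mulrC.
exact: le_lt_trans h1 hv.
Qed.

Lemma Oy_cst x : X x -> Oy (cst (Wm *m x + 0)).
Proof. by move=> Xx; split; [exact: phase_cst|rewrite /= addr0 PmW]. Qed.

Lemma G_diff (v1 v2 : 'cV[R]_m) :
  G v1 - G v2 = HT^-1 *: (wt^-1 *: (E m q *m (Psi (Pm v1) - Psi (Pm v2))) - (v1 - v2)).
Proof. by rewrite /G mulmxBr; apply/matrixP => i j; rewrite !mxE; ring. Qed.

Lemma scal_ineq (A hv : R) : 0 <= A -> 0 <= hv <= Lp ^+ 2 / 4 ->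
  hv * (HT^-1 * (wt^-1 * (KPsi * A) + w * A)) <= K * (w * A).
Proof.
move=> A0 /andP[h1 h2].
have HT1 := HT0.
have B : 0 <= HT^-1 * (wt^-1 * (KPsi * A) + w * A).
  apply: mulr_ge0; first by rewrite invr_ge0 ltW.
  apply: addr_ge0; apply: mulr_ge0 => //; [by rewrite invr_ge0 ltW|exact: mulr_ge0|exact: ltW].
apply: le_trans (ler_wpM2r B h2) _.
have Lpn : Lp != 0 by rewrite gt_eqF // Lp0.
have -> : Lp ^+ 2 / 4 * (HT^-1 * (wt^-1 * (KPsi * A) + w * A)) =
   (w * A / tau) * (2 * (1 + KPsi / (w * wt))).
  rewrite /HT /Lp; field; rewrite ?gt_eqF //; try (apply/andP; split); rewrite ?gt_eqF //.
have -> : K * (w * A) = (w * A / tau) * (K * tau) by field; rewrite gt_eqF.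
apply: ler_wpM2l => //.
by apply: divr_ge0; [apply: mulr_ge0 => //; apply: ltW|apply: ltW].
Qed.


Lemma Lip_F t x1 x2 : X x1 -> X x2 ->
  `|Fv t (cst (Wm *m x1 + 0)) - Fv t (cst (Wm *m x2 + 0))|
    <= K * supn tau (cst (Wm *m x1 + 0) - cst (Wm *m x2 + 0)).
Proof.
move=> X1 X2.
have ca : continuous (cst (Wm *m x1 + 0) - cst (Wm *m x2 + 0) : R -> 'cV[R]_m).
  by move=> s; apply: continuousB; exact: cst_continuous.
apply: le_trans _ (ler_wpM2l K0 (supn_m _ ca)).
rewrite /= !addr0.
have da : `|Wm *m x1 - Wm *m x2| = w * `|x1 - x2|.
  by rewrite -mulmxBr /Wm -scalemxAl normrZ E_norm_eq ?leq_maxl // ger0_norm // ltW.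
rewrite da /Fv /= ?addr0 -scalerBr G_diff !PmW.
have hb := hh_bound al Lp Lp0 t.
move: hb; set hv := hh al Lp t => hb.
rewrite normrZ (ger0_norm (x := hv)); last by case/andP: hb.

apply: le_trans (scal_ineq _ _ (normr_ge0 (x1 - x2)) hb).
apply: ler_wpM2l; first by case/andP: hb.
rewrite normrZ ger0_norm ?invr_ge0 ?(ltW HT0) //.
apply: ler_wpM2l; first by rewrite invr_ge0 (ltW HT0).
apply: le_trans (ler_normB _ _) _.
rewrite normrZ ger0_norm ?invr_ge0 ?(ltW wt0) // da.
apply: lerD => //.
apply: ler_wpM2l; first by rewrite invr_ge0 (ltW wt0).
apply: le_trans (E_norm_le _) _.
exact: LipPsi.
Qed.

Lemma clamp_cl s : clamp tau s = cl (- tau) 0 s.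
Proof. by []. Qed.

Lemma ntau0 : - tau <= 0.
Proof. by rewrite oppr_le0 ltW. Qed.

Lemma seg_phase (y : R -> 'cV[R]_m) t : continuous y -> phase tau (seg tau y t).
Proof.
move=> cy; split.
  have cf : continuous (fun s => t + clamp tau s).
    apply: (lip_cont _ 1) => // s s'; rewrite mul1r opprD addrACA subrr add0r.
    by rewrite !clamp_cl; apply: cl_lip; exact: ntau0.
  by move=> s; apply: (continuous_comp (cf s) (cy _)).
move=> s; rewrite /seg; congr (y (t + _)).
rewrite !clamp_cl; symmetry; apply: cl_id; apply: cl_in; exact: ntau0.
Qed.

Lemma ysol_cont a : continuous (ysol a).
Proof.
apply: (lip_cont _ (2 * Lp ^+ 2 * `|G a|)).
  by apply: mulr_ge0 => //; apply: mulr_ge0 => //; apply: sqr_ge0.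
move=> s t; rewrite /ysol opprD addrACA subrr add0r -scalerBl normrZ.
rewrite mulrAC; apply: ler_wpM2r => //; exact: HH_lip Lp0 t s.
Qed.

Lemma HH0 s : s <= al -> HH al Lp s = 0.
Proof. exact: HH_le Lp0 s. Qed.

Lemma ysol_early a s : s <= al -> ysol a s = a.
Proof. by move=> h; rewrite /ysol HH0 // scale0r addr0. Qed.

Lemma ysol_deriv a (D : set R) t : has_deriv_within D (ysol a) t (hh al Lp t *: G a).
Proof.
apply: (deriv_lemma a (G a) _ _ (2 * Lp)).
  by apply: mulr_ge0 => //; apply: ltW; exact: Lp0.
exact: H_taylor Lp0 t.
Qed.

Lemma exist_sol x : X x ->
  exists c y, T < c /\ dde_solution tau setT Oy Fv 0 (cst (Wm *m x + 0)) c y.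
Proof.
move=> Xx; set a := Wm *m x + 0.
have ha := al_ge.
exists (T + tau / 8), (ysol a); split; first by have := tau0; lra.
split; first by have := tau0; have := tauT; lra.
split; first exact/continuous_subspaceT/ysol_cont.
split.
  move=> s /andP[h1 h2]; rewrite add0r ysol_early //.
  by have := tau0; lra.
move=> t /andP[h1 h2]; split => //.
have eq1 : seg tau (ysol a) t (- tau) = a.
  rewrite seg_m ysol_early //.
  by move: h2; rewrite /al /Lp add0r; have := tau0; lra.
split.
  split; first by apply: seg_phase; exact: ysol_cont.
  by rewrite eq1 /a addr0 PmW.
by rewrite /Fv eq1; exact: ysol_deriv.
Qed.


Lemma cst_deriv (a : 'cV[R]_m) (D : set R) t : has_deriv_within D (cst a) t 0.
Proof.
move=> e e0; exists 1; split => // h _ _ _.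
by rewrite /= subrr scaler0 subr0 normr0 ltW.
Qed.

Lemma sol_const a c y : dde_solution tau setT Oy Fv 0 (cst a) c y ->
  forall t, 0 <= t < c -> t <= al -> y t = a.
Proof.
move=> [c0 [_ [yi yd]]] t /andP[t0 tc] ta.
have y0 : y 0 = a.
  have hs' : - tau <= (0:R) <= 0 by rewrite lexx andbT ntau0.
  by have := yi _ hs'; rewrite add0r.
have HD : forall s, 0 <= s <= t -> [set s | 0 <= s < 0 + c] s.
  move=> s /andP[s0 st]; rewrite /= add0r s0 /=; exact: le_lt_trans st tc.
have Hf : forall s, 0 <= s <= t -> has_deriv_within [set s | 0 <= s < 0 + c] y s ((fun _ => 0) s).
  move=> s hs; have [_ [_ hd]] := yd s (HD s hs).
  move: hd; rewrite /Fv hh_le ?scale0r //; first exact: Lp0.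
  by case/andP: hs => _ st; exact: le_trans st ta.
have Hg : forall s, 0 <= s <= t -> has_deriv_within [set s | 0 <= s < 0 + c] (cst a) s ((fun _ => 0) s).
  by move=> s _; exact: cst_deriv.
have := diff_const _ y (cst a) (fun _ => 0) 0 t t0 HD Hf Hg.
rewrite /= y0 subrr => /eqP; rewrite subr_eq0 => /eqP //.
Qed.

Lemma Fv_sol a c y : dde_solution tau setT Oy Fv 0 (cst a) c y ->
  forall s, 0 <= s < c -> Fv s (seg tau y s) = hh al Lp s *: G a.
Proof.
move=> sol s /andP[s0 sc]; have sol' := sol.
move: sol' => [c0 [_ [yi yd]]].
case: (leP T s) => hs.
  by rewrite /Fv hh_ge ?scale0r // ?alLp //; exact: Lp0.
rewrite /Fv seg_m; congr (_ *: G _).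
have h1 : s - tau <= al by rewrite /al /Lp; have := tau0; lra.
case: (leP (s - tau) 0) => h2.
  have hs' : - tau <= s - tau <= 0 by apply/andP; split; lra.
  by have := yi _ hs'; rewrite add0r.
apply: (sol_const _ _ _ sol) => //; apply/andP; split; first exact: ltW.
by apply: le_lt_trans sc; rewrite lerBlDr lerDl ltW.
Qed.

Lemma sol_eq a c y : dde_solution tau setT Oy Fv 0 (cst a) c y ->
  forall t, 0 <= t < c -> y t = ysol a t.
Proof.
move=> sol t /andP[t0 tc]; have sol' := sol.
move: sol' => [c0 [_ [yi yd]]].
have y0 : y 0 = a.
  have hs' : - tau <= (0:R) <= 0 by rewrite lexx andbT ntau0.
  by have := yi _ hs'; rewrite add0r.
have HD : forall s, 0 <= s <= t -> [set s | 0 <= s < 0 + c] s.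
  move=> s /andP[s0 st]; rewrite /= add0r s0 /=; exact: le_lt_trans st tc.
have Hf : forall s, 0 <= s <= t ->
   has_deriv_within [set s | 0 <= s < 0 + c] y s ((fun s => hh al Lp s *: G a) s).
  move=> s hs; have [_ [_ hd]] := yd s (HD s hs).
  rewrite -(Fv_sol _ _ _ sol) //.
  case/andP: hs => s0 st; rewrite s0 /=; exact: le_lt_trans st tc.
have Hg : forall s, 0 <= s <= t ->
   has_deriv_within [set s | 0 <= s < 0 + c] (ysol a) s ((fun s => hh al Lp s *: G a) s).
  by move=> s _; exact: ysol_deriv.
have := diff_const _ y (ysol a) _ 0 t t0 HD Hf Hg.
rewrite y0 (ysol_early a 0); last by have h := al_ge; have h' := tau0; lra.
by rewrite subrr => /eqP; rewrite subr_eq0 => /eqP.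
Qed.


Definition lin (j : nat) (v : 'cV[R]_m) (vs : seq 'cV[R]_m) : 'cV[R]_m :=
  match j with 0%N => v | 1%N => head 0 vs | _ => 0 end.

Definition evs (hs : seq (R -> 'cV[R]_m)) : seq 'cV[R]_m := map (fun p => p (- tau)) hs.
Definition pss (hs : seq (R -> 'cV[R]_m)) : seq 'cV[R]_n := map (fun p => E n m *m p (- tau)) hs.

Definition DF (DP : nat -> R -> 'cV[R]_n -> seq 'cV[R]_n -> 'cV[R]_q)
  (j : nat) (t : R) (u : R -> 'cV[R]_m) (hs : seq (R -> 'cV[R]_m)) : 'cV[R]_m :=
  (hh al Lp t / HT) *: ((w ^- j / wt) *: (E m q *m DP j 0 (Pm (u (- tau))) (pss hs))
     - lin j (u (- tau)) (evs hs)).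

Lemma Pm_add (v v' : 'cV[R]_m) : Pm (v + v') = Pm v + Pm v'.
Proof. by rewrite /Pm mulmxDr scalerDr. Qed.

Lemma Pm_norm (v : 'cV[R]_m) : `|Pm v| <= w^-1 * `|v|.
Proof. by have := Pm_lip v 0; rewrite /Pm !mulmx0 scaler0 !subr0. Qed.

Lemma prod_est (a a' A0 B : R) (Z Z' : 'cV[R]_m) : `|a| <= A0 -> `|Z| <= B ->
  `|a' *: Z' - a *: Z| <= `|a' - a| * (B + `|Z' - Z|) + A0 * `|Z' - Z|.
Proof.
move=> ha hZ.
have -> : a' *: Z' - a *: Z = (a' - a) *: Z' + a *: (Z' - Z).
  by apply/matrixP => i j; rewrite !mxE; ring.
apply: le_trans (ler_normD _ _) _; rewrite !normrZ.
apply: lerD; last by apply: ler_wpM2r.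
apply: ler_wpM2l => //.
have hZ' : `|Z'| <= `|Z| + `|Z' - Z|.
  by have := ler_normD Z (Z' - Z); rewrite addrCA subrr addr0.
apply: le_trans hZ' _; apply: lerD => //.
Qed.

Lemma est_choice (e B A0 La : R) : 0 < e -> 0 <= B -> 0 <= A0 -> 0 <= La ->
  exists eps del, 0 < eps /\ 0 < del /\ forall x y, 0 <= x -> x <= La * del ->
    0 <= y <= eps -> x * (B + y) + A0 * y <= e.
Proof.
move=> e0 B0 A00 La0.
have p1 : 0 < 2 * (A0 + 1) by lra.
have p2 : 0 < 2 * (La * (B + 1) + 1) by have := mulr_ge0 La0 B0; nra.
exists (Num.min 1 (e / (2 * (A0 + 1)))), (e / (2 * (La * (B + 1) + 1))).
split; first by rewrite lt_min ltr01 divr_gt0.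
split; first exact: divr_gt0.
move=> x y x0 hx /andP[y0 hy].
have y1 : y <= 1 by apply: le_trans hy _; rewrite ge_min lexx.
have y2 : y <= e / (2 * (A0 + 1)) by apply: le_trans hy _; rewrite ge_min lexx orbT.
have h1 : x * (B + y) <= e / 2.
  set c := La * (B + 1).
  have c0 : 0 <= c by apply: mulr_ge0 => //; lra.
  apply: (le_trans (y := La * (e / (2 * (La * (B + 1) + 1))) * (B + 1))).
    by apply: ler_pM => //; lra.
  rewrite -/c mulrAC -/c.
  have -> : e / 2 = c * (e / (2 * (c + 1))) + e / (2 * (c + 1)).
    by field; rewrite gt_eqF //; lra.
  rewrite lerDl; apply: divr_ge0; lra.
have h2 : A0 * y <= e / 2.
  apply: (le_trans (y := A0 * (e / (2 * (A0 + 1))))); first by apply: ler_wpM2l.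
  rewrite mulrA ler_pdivrMr // (_ : e / 2 * (2 * (A0 + 1)) = e * (A0 + 1)); last by field.
  nra.
lra.
Qed.


Lemma G_dlip (v v' : 'cV[R]_m) :
  `|G v' - G v| <= HT^-1 * (wt^-1 * `|Psi (Pm v') - Psi (Pm v)| + `|v' - v|).
Proof.
rewrite G_diff normrZ ger0_norm ?invr_ge0 ?(ltW HT0) //.
apply: ler_wpM2l; first by rewrite invr_ge0 (ltW HT0).
apply: le_trans (ler_normB _ _) _; apply: lerD => //.
rewrite normrZ ger0_norm ?invr_ge0 ?(ltW wt0) //.
apply: ler_wpM2l; first by rewrite invr_ge0 (ltW wt0).
exact: E_norm_le.
Qed.

Lemma ev_sub (u u' : R -> 'cV[R]_m) : phase tau u -> phase tau u' ->
  `|u' (- tau) - u (- tau)| <= supn tau (u' - u).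
Proof.
move=> pu pu'; have c : continuous (u' - u) by move=> s; apply: continuousB; [exact: pu'.1|exact: pu.1].
exact: supn_m _ c.
Qed.

Lemma Lp2_ge0 : 0 <= Lp ^+ 2 / 4.
Proof. by apply: divr_ge0 => //; apply: sqr_ge0. Qed.

Lemma hh_abs t : `|hh al Lp t| <= Lp ^+ 2 / 4.
Proof. by have /andP[h1 h2] := hh_bound al Lp Lp0 t; rewrite ger0_norm. Qed.

Lemma hh_lipM t t' : `|hh al Lp t' - hh al Lp t| <= Lp * `|t' - t|.
Proof. exact: hh_lip Lp0 t t'. Qed.

Section Reg.
Variable k : nat.
Variable DP : nat -> R -> 'cV[R]_n -> seq 'cV[R]_n -> 'cV[R]_q.
Hypothesis contPsi : forall (t : R) x, setT t -> X x -> forall e : R, 0 < e -> exists d : R, 0 < d /\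
     forall (t' : R) x', setT t' -> X x' -> `|t' - t| < d -> `|x' - x| < d ->
       `|(fun _ x => Psi x) t' x' - (fun _ x => Psi x) t x| <= e.
Hypothesis DP0 : forall (t : R) x, setT t -> X x -> DP 0%N t x [::] = (fun _ x => Psi x) t x.

Lemma regA : forall (t : R) u, setT t -> Oy u -> forall e : R, 0 < e -> exists d : R, 0 < d /\
     forall (t' : R) u', setT t' -> Oy u' -> `|t' - t| < d -> supn tau (u' - u) < d ->
       `|Fv t' u' - Fv t u| <= e.
Proof.
move=> t u _ [pu Xu] e e0.
have [eps [del [eps0 [del0 Hest]]]] :=
  est_choice e (`|G (u (- tau))|) (Lp ^+ 2 / 4) Lp e0 (normr_ge0 _) Lp2_ge0 (ltW Lp0).
have HT1 := HT0.
have e1 : 0 < eps * HT * wt / 2 by apply: divr_gt0 => //; apply: mulr_gt0 => //; apply: mulr_gt0.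
have [d1 [d10 Hd1]] := contPsi 0 (Pm (u (- tau))) I Xu _ e1.
have e2 : 0 < eps * HT / 2 by apply: divr_gt0 => //; apply: mulr_gt0.
exists (Num.min del (Num.min (w * d1) (eps * HT / 2))).
split; first by rewrite !lt_min del0 e2 mulr_gt0.
move=> t' u' _ [pu' Xu'] ht hu.
move: hu; rewrite !lt_min => /andP[hu1 /andP[hu2 hu3]].
move: ht; rewrite !lt_min => /andP[ht1 _].
have hv := ev_sub _ _ pu pu'.
have hx : `|Pm (u' (- tau)) - Pm (u (- tau))| < d1.
  apply: le_lt_trans (Pm_lip _ _) _.
  rewrite ltr_pdivrMl // ; apply: le_lt_trans hv _; exact: hu2.
have h00 : `|(0:R) - 0| < d1 by rewrite subrr normr0.
have hP := Hd1 0 _ I Xu' h00 hx.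
rewrite /= in hP.
have hG : `|G (u' (- tau)) - G (u (- tau))| <= eps.
  apply: le_trans (G_dlip _ _) _.
  apply: (le_trans (y := HT^-1 * (wt^-1 * (eps * HT * wt / 2) + eps * HT / 2))).
    apply: ler_wpM2l; first by rewrite invr_ge0 ltW.
    apply: lerD; last by apply: le_trans hv (ltW hu3).
    by apply: ler_wpM2l => //; rewrite invr_ge0 ltW.
  rewrite le_eqVlt; apply/orP; left; apply/eqP; field.
  by rewrite !gt_eqF.
rewrite /Fv.
apply: le_trans (prod_est _ _ _ _ _ _ (hh_abs t) (lexx _)) _.
apply: Hest; first exact: normr_ge0.
  apply: le_trans (hh_lipM t t') _; apply: ler_wpM2l; first exact: ltW Lp0.
  exact: ltW.
by rewrite normr_ge0.
Qed.

Lemma regB : forall (t : R) u, setT t -> Oy u -> DF DP 0 t u [::] = Fv t u.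
Proof.
move=> t u _ [pu Xu].
rewrite /DF /Fv /G /= DP0 // expr0 invr1 mul1r scalerA.
by rewrite mulrC.
Qed.


Hypothesis DPml : forall j (t : R) x, (j <= k)%N -> setT t -> X x ->
  bounded_multilinear (fun _ : 'cV[R]_n => True) (fun x : 'cV[R]_n => `|x|) j (DP j t x).

Lemma lin_mix j v (es1 es2 : seq 'cV[R]_m) e1 e2 (a : R) :
  (size es1 + size es2).+1 = j ->
  lin j v (es1 ++ (a *: e1 + e2) :: es2) = a *: lin j v (es1 ++ e1 :: es2) + lin j v (es1 ++ e2 :: es2).
Proof.
case: j => [|[|j]] //=.
  move=> /eqP; rewrite eqSS addn_eq0 !size_eq0 => /andP[/eqP -> /eqP ->] //.
by move=> _; rewrite scaler0 addr0.
Qed.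

Lemma mix_id (c1 c2 a : R) (A B : 'cV[R]_q) (l1 l2 : 'cV[R]_m) :
  c1 *: (c2 *: (E m q *m (a *: A + B)) - (a *: l1 + l2)) =
  a *: (c1 *: (c2 *: (E m q *m A) - l1)) + c1 *: (c2 *: (E m q *m B) - l2).
Proof.
rewrite mulmxDr -scalemxAr.
move: (E m q *m A) (E m q *m B) => A' B'.
by apply/matrixP => i j; rewrite !mxE; ring.
Qed.

Lemma lin_bnd j v (hs : seq (R -> 'cV[R]_m)) : size hs = j ->
  (forall h, h \in hs -> `|h (- tau)| <= supn tau h /\ 0 <= supn tau h) ->
  `|lin j v (evs hs)| <= (`|v| + 1) * \prod_(h <- hs) supn tau h.
Proof.
move=> <- H.
have v1 : 1 <= `|v| + 1 by rewrite lerDr.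
case: hs H => [|h1 [|h2 hs]] H /=.
- by rewrite big_nil mulr1 lerDl.
- rewrite big_cons big_nil mulr1.
  have [a b] := H h1 (mem_head _ _).
  apply: le_trans a _; rewrite -{1}(mul1r (supn tau h1)); exact: ler_wpM2r.
- rewrite normr0; apply: mulr_ge0; first by apply: le_trans v1.
  rewrite big_seq; apply: prodr_ge0 => h hin; exact: (H h hin).2.
Qed.

Lemma regC : forall j (t : R) u, (j <= k)%N -> setT t -> Oy u ->
  bounded_multilinear (phase tau) (supn tau) j (DF DP j t u).
Proof.
move=> j t u jk _ [pu Xu].
have [ml [Cp HCp]] := DPml j 0 (Pm (u (- tau))) jk I Xu.
split.
  move=> hs1 hs2 a u1 v1 hsz _ _ _ _.
  rewrite /DF /pss /evs !map_cat /=.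
  have -> : E n m *m (a *: u1 + v1) (- tau) = a *: (E n m *m u1 (- tau)) + E n m *m v1 (- tau).
    by rewrite mulmxDr -scalemxAr.
  rewrite (ml _ _ a _ _ _ (fun _ _ => I) (fun _ _ => I) I I); last by rewrite !size_map.
  have -> : (a *: u1 + v1) (- tau) = a *: u1 (- tau) + v1 (- tau) by [].
  by rewrite lin_mix ?size_map // mix_id.
exists (`|hh al Lp t / HT| * (`|w ^- j / wt| * `|Cp| + (`|u (- tau)| + 1))).
move=> hs hsz hadm.
have Hs : forall h, h \in hs -> `|h (- tau)| <= supn tau h /\ 0 <= supn tau h.
  move=> h hin; have [ch _] := hadm h hin; split; first exact: supn_m.
  by apply: supn_ge0 => //; apply: ltW.
set PS := \prod_(h <- hs) supn tau h.
have PS0 : 0 <= PS by rewrite /PS big_seq; apply: prodr_ge0 => h hin; exact: (Hs h hin).2.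
have hP : \prod_(p <- pss hs) `|p| <= PS.
  rewrite /pss big_map /PS !big_seq; apply: ler_prod => h hin; apply/andP; split => //.
  apply: le_trans (E_norm_le _) _; exact: (Hs h hin).1.
have hDP : `|DP j 0 (Pm (u (- tau))) (pss hs)| <= `|Cp| * PS.
  apply: le_trans (HCp _ _ (fun _ _ => I)) _; first by rewrite /pss size_map.
  apply: (le_trans (y := `|Cp| * \prod_(p <- pss hs) `|p|)).
    apply: ler_wpM2r; first by apply: prodr_ge0 => *; exact: normr_ge0.
    exact: real_ler_norm (num_real _).
  by apply: ler_wpM2l.
have HZ : `|(w ^- j / wt) *: (E m q *m DP j 0 (Pm (u (- tau))) (pss hs)) - lin j (u (- tau)) (evs hs)|
   <= (`|w ^- j / wt| * `|Cp| + (`|u (- tau)| + 1)) * PS.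
  rewrite mulrDl; apply: le_trans (ler_normB _ _) _; apply: lerD; last exact: lin_bnd _ _ _ hsz Hs.
  rewrite normrZ -mulrA; apply: ler_wpM2l => //.
  by apply: le_trans (E_norm_le _) _.
rewrite /DF normrZ.
apply: le_trans (ler_wpM2l (normr_ge0 _) HZ) _.
by rewrite mulrA.
Qed.


Hypothesis DPder : forall j (t : R) x, (j < k)%N -> setT t -> X x ->
  forall e : R, 0 < e -> exists d : R, 0 < d /\
  forall h, (fun _ : 'cV[R]_n => True) h -> `|h| < d -> X (x + h) ->
  forall hs, size hs = j -> all_adm (fun _ : 'cV[R]_n => True) hs ->
    all_unit (fun x : 'cV[R]_n => `|x|) hs ->
    `|DP j t (x + h) hs - DP j t x hs - DP j.+1 t x (h :: hs)| <= e * `|h|.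

Lemma DP_hom j x (c : R) z ps : (j < k)%N -> X x -> size ps = j ->
  DP j.+1 0 x ((c *: z) :: ps) = c *: DP j.+1 0 x (z :: ps).
Proof.
move=> jk Xx psz; have [ml _] := DPml j.+1 0 x jk I Xx.
have sz : (size ([::] : seq 'cV[R]_n) + size ps).+1 = j.+1 by rewrite /= psz.
have h0 : DP j.+1 0 x (0 :: ps) = 0.
  have := ml [::] ps 1 0 0 sz (fun _ _ => I) (fun _ _ => I) I I.
  rewrite /= !scale1r !addr0 => H.
  by have := congr1 (fun X => X - DP j.+1 0 x (0 :: ps)) H; rewrite /= subrr addrK => <-.
have := ml [::] ps c z 0 sz (fun _ _ => I) (fun _ _ => I) I I.
by rewrite /= addr0 h0 addr0.
Qed.

Lemma lin_der j v z (es : seq 'cV[R]_m) :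
  lin j (v + z) es - lin j v es - lin j.+1 v (z :: es) = 0.
Proof.
case: j => [|[|j]] /=; last by rewrite !subrr.
  by apply/matrixP => i j; rewrite !mxE; ring.
by rewrite !subrr.
Qed.

Lemma diff_id (a b b' : R) (A1 A2 A3 : 'cV[R]_q) (l1 l2 l3 : 'cV[R]_m) :
  b' * w = b -> l1 - l2 - l3 = 0 ->
  a *: (b *: (E m q *m A1) - l1) - a *: (b *: (E m q *m A2) - l2)
    - a *: (b' *: (E m q *m (w *: A3)) - l3) = a *: (b *: (E m q *m (A1 - A2 - A3))).
Proof.
move=> hb hl.
have -> : l3 = l1 - l2 by apply/eqP; rewrite eq_sym -subr_eq0 hl.
rewrite -scalemxAr (scalerA b' w) hb !mulmxBr.
move: (E m q *m A1) (E m q *m A2) (E m q *m A3) => B1 B2 B3.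
by apply/matrixP => i j; rewrite !mxE; ring.
Qed.

Lemma wexp j : w ^- j.+1 / wt * w = w ^- j / wt.
Proof.
have wn : w != 0 by rewrite gt_eqF.
have wtn : wt != 0 by rewrite gt_eqF.
have wjn : w ^+ j != 0 by rewrite expf_neq0.
rewrite exprS invfM; field.
by rewrite wn wtn wjn.
Qed.

Lemma fin_est (a b : R) (V : 'cV[R]_q) (c0 e s : R) : 0 <= b -> 0 < c0 ->
  `|a| * b * w^-1 + 1 <= c0 -> 0 <= s -> 0 < e -> `|V| <= e / c0 * (w^-1 * s) ->
  `|a *: (b *: (E m q *m V))| <= e * s.
Proof.
move=> b0 c00 hc s0 e0 hV.
rewrite normrZ normrZ (ger0_norm b0).
apply: (le_trans (y := `|a| * (b * (e / c0 * (w^-1 * s))))).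
  apply: ler_wpM2l => //; apply: ler_wpM2l => //.
  exact: le_trans (E_norm_le _) hV.
have -> : `|a| * (b * (e / c0 * (w^-1 * s))) = (`|a| * b * w^-1) * (e * s) / c0.
  by field; rewrite ?(gt_eqF c00) ?(gt_eqF w0).
rewrite ler_pdivrMr // [X in _ <= X]mulrC ler_wpM2r //; first by apply: mulr_ge0 => //; exact: ltW.
by apply: le_trans hc; rewrite lerDl.
Qed.

Lemma regD : forall j (t : R) u, (j < k)%N -> setT t -> Oy u ->
  forall e : R, 0 < e -> exists d : R, 0 < d /\
  forall h, phase tau h -> supn tau h < d -> Oy (u + h) ->
  forall hs, size hs = j -> all_adm (phase tau) hs -> all_unit (supn tau) hs ->
    `|DF DP j t (u + h) hs - DF DP j t u hs - DF DP j.+1 t u (h :: hs)| <= e * supn tau h.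
Proof.
move=> j t u jk _ [pu Xu] e e0.
set x := Pm (u (- tau)).
set a := hh al Lp t / HT.
set b := w ^- j / wt.
have b0 : 0 <= b by apply: divr_ge0; [rewrite invr_ge0; apply: exprn_ge0; apply: ltW|apply: ltW].
set c0 := `|a| * b * w^-1 + 1.
have c00 : 0 < c0.
  have : 0 <= `|a| * b * w^-1 by apply: mulr_ge0; [apply: mulr_ge0|rewrite invr_ge0 ltW].
  rewrite /c0; lra.
have [d' [d'0 Hd']] := DPder j 0 x jk I Xu (e / c0) (divr_gt0 e0 c00).
exists (d' * w); split; first exact: mulr_gt0.
move=> hh' phh hhd [pu' Xu'] hs hsz hadm hunit.
set z := hh' (- tau).
set h' := Pm z.
have hz : `|z| <= supn tau hh' by apply: supn_m; exact: phh.1.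
have hhn1 : `|h'| <= w^-1 * supn tau hh'.
  apply: le_trans (Pm_norm _) _; apply: ler_wpM2l; last exact: hz.
  by rewrite invr_ge0 (ltW w0).
have hd : `|h'| < d'.
  apply: le_lt_trans hhn1 _; rewrite ltr_pdivrMl // mulrC; exact: hhd.
have E1 : Pm ((u + hh') (- tau)) = x + h' by rewrite -Pm_add.
have Xxh : X (x + h') by rewrite -E1.
have psz : size (pss hs) = j by rewrite size_map.
have punit : all_unit (fun x : 'cV[R]_n => `|x|) (pss hs).
  move=> p /mapP [h hin ->].
  apply: le_trans (E_norm_le _) _; apply: le_trans (hunit h hin).
  by apply: supn_m; have [] := hadm h hin.
have HD := Hd' h' I hd Xxh (pss hs) psz (fun _ _ => I) punit.
have E2 : pss (hh' :: hs) = (w *: h') :: pss hs.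
  by rewrite /= /h' /Pm scalerA mulfV ?gt_eqF // scale1r.
have E3 : evs (hh' :: hs) = z :: evs hs by [].
have E4 : (u + hh') (- tau) = u (- tau) + z by [].
rewrite /DF E1 E2 E3 E4 (DP_hom _ _ _ _ _ jk Xu psz) -/a -/b.
rewrite (diff_id _ _ _ _ _ _ _ _ _ (wexp j) (lin_der _ _ _ _)).
have s0 : 0 <= supn tau hh' by apply: supn_ge0; [exact: phh.1|exact: ltW].
apply: (fin_est _ _ _ _ _ _ b0 c00 (lexx _) s0 e0).
apply: le_trans HD _.
by apply: ler_wpM2l => //; apply: ltW; apply: divr_gt0.
Qed.


Hypothesis DPcont : forall j (t : R) x, (1 <= j <= k)%N -> setT t -> X x ->
  forall e : R, 0 < e -> exists d : R, 0 < d /\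
  forall (t' : R) x', setT t' -> X x' -> `|t' - t| < d -> `|x' - x| < d ->
  forall hs, size hs = j -> all_adm (fun _ : 'cV[R]_n => True) hs ->
    all_unit (fun x : 'cV[R]_n => `|x|) hs -> `|DP j t' x' hs - DP j t x hs| <= e.

Hypothesis DPbnd : exists C : R, forall j (t : R) x, (1 <= j <= k)%N -> setT t -> X x ->
  forall hs, size hs = j -> all_adm (fun _ : 'cV[R]_n => True) hs ->
    all_unit (fun x : 'cV[R]_n => `|x|) hs -> `|DP j t x hs| <= C.

Lemma lin_indep j v v' (es : seq 'cV[R]_m) : (0 < j)%N -> lin j v es = lin j v' es.
Proof. by case: j. Qed.

Lemma lin_unit j v (hs : seq (R -> 'cV[R]_m)) : (0 < j)%N ->
  all_adm (phase tau) hs -> all_unit (supn tau) hs -> `|lin j v (evs hs)| <= 1.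
Proof.
move=> j0 hadm hunit.
case: j j0 => [|[|j]] // _ /=; last by rewrite normr0.
case: hs hadm hunit => [|h1 hs] hadm hunit /=; first by rewrite normr0.
apply: le_trans (hunit h1 (mem_head _ _)).
by apply: supn_m; have [] := hadm h1 (mem_head _ _).
Qed.

Lemma pss_unit (hs : seq (R -> 'cV[R]_m)) :
  all_adm (phase tau) hs -> all_unit (supn tau) hs ->
  all_unit (fun x : 'cV[R]_n => `|x|) (pss hs).
Proof.
move=> hadm hunit p /mapP [h hin ->].
apply: le_trans (E_norm_le _) _; apply: le_trans (hunit h hin).
by apply: supn_m; have [] := hadm h hin.
Qed.

Lemma bj_ge0 j : 0 <= w ^- j / wt.
Proof. by apply: divr_ge0; [rewrite invr_ge0; apply: exprn_ge0; apply: ltW|apply: ltW]. Qed.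

Lemma Z_bnd j x (hs : seq (R -> 'cV[R]_m)) v (Cb : R) : (0 < j)%N ->
  all_adm (phase tau) hs -> all_unit (supn tau) hs ->
  `|DP j 0 x (pss hs)| <= Cb ->
  `|(w ^- j / wt) *: (E m q *m DP j 0 x (pss hs)) - lin j v (evs hs)| <= (w ^- j / wt) * `|Cb| + 1.
Proof.
move=> j0 hadm hunit hC.
apply: le_trans (ler_normB _ _) _; apply: lerD; last exact: lin_unit.
rewrite normrZ (ger0_norm (bj_ge0 j)); apply: ler_wpM2l; first exact: bj_ge0.
apply: le_trans (E_norm_le _) _; apply: le_trans hC _; exact: real_ler_norm (num_real _).
Qed.

Lemma a_abs t : `|hh al Lp t / HT| <= (Lp ^+ 2 / 4) / HT.
Proof.
rewrite normrM (ger0_norm (x := HT^-1)) ?invr_ge0 ?(ltW HT0) //.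
by apply: ler_wpM2r; [rewrite invr_ge0 (ltW HT0)|exact: hh_abs].
Qed.

Lemma regE : forall j (t : R) u, (1 <= j <= k)%N -> setT t -> Oy u ->
  forall e : R, 0 < e -> exists d : R, 0 < d /\
  forall (t' : R) u', setT t' -> Oy u' -> `|t' - t| < d -> supn tau (u' - u) < d ->
  forall hs, size hs = j -> all_adm (phase tau) hs -> all_unit (supn tau) hs ->
    `|DF DP j t' u' hs - DF DP j t u hs| <= e.
Proof.
move=> j t u hj _ [pu Xu] e e0.
have j0 : (0 < j)%N by case/andP: hj.
have [Cb HCb] := DPbnd.
set b := w ^- j / wt.
have b0 : 0 <= b by exact: bj_ge0.
set B := b * `|Cb| + 1.
have B0 : 0 <= B by rewrite /B; have := mulr_ge0 b0 (normr_ge0 Cb); lra.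
have HT1 := HT0.
have A00 : 0 <= (Lp ^+ 2 / 4) / HT by apply: divr_ge0; [exact: Lp2_ge0|exact: ltW].
have La0 : 0 <= Lp / HT by apply: divr_ge0; apply: ltW; [exact: Lp0|].
have [eps [del [eps0 [del0 Hest]]]] := est_choice e B _ _ e0 B0 A00 La0.
have e1 : 0 < eps / (b + 1) by apply: divr_gt0 => //; lra.
have [d1 [d10 Hd1]] := DPcont j 0 (Pm (u (- tau))) hj I Xu _ e1.
exists (Num.min del (w * d1)); split; first by rewrite lt_min del0 mulr_gt0.
move=> t' u' _ [pu' Xu'] ht hu hs hsz hadm hunit.
move: ht hu; rewrite !lt_min => /andP[ht1 _] /andP[_ hu2].
have hx : `|Pm (u' (- tau)) - Pm (u (- tau))| < d1.
  apply: le_lt_trans (Pm_lip _ _) _.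
  rewrite ltr_pdivrMl //; exact: le_lt_trans (ev_sub _ _ pu pu') hu2.
have psz : size (pss hs) = j by rewrite size_map.
have h00 : `|(0:R) - 0| < d1 by rewrite subrr normr0.
have HD := Hd1 0 _ I Xu' h00 hx (pss hs) psz (fun _ _ => I) (pss_unit _ hadm hunit).
rewrite /DF (lin_indep j (u' (- tau)) (u (- tau))) //.
apply: le_trans (prod_est _ _ _ _ _ _ (a_abs t)
  (Z_bnd _ _ _ (u (- tau)) _ j0 hadm hunit (HCb j 0 _ hj I Xu _ psz (fun _ _ => I) (pss_unit _ hadm hunit)))) _.
apply: Hest; first exact: normr_ge0.
  rewrite -mulrBl normrM (ger0_norm (x := HT^-1)) ?invr_ge0 ?(ltW HT0) //.
  rewrite mulrAC; apply: ler_wpM2r; first by rewrite invr_ge0 ltW.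
  apply: le_trans (hh_lipM t t') _; apply: ler_wpM2l; [exact: ltW Lp0|exact: ltW].
apply/andP; split; first exact: normr_ge0.
have -> : (b *: (E m q *m DP j 0 (Pm (u' (- tau))) (pss hs)) - lin j (u (- tau)) (evs hs)) -
  (b *: (E m q *m DP j 0 (Pm (u (- tau))) (pss hs)) - lin j (u (- tau)) (evs hs)) =
  b *: (E m q *m (DP j 0 (Pm (u' (- tau))) (pss hs) - DP j 0 (Pm (u (- tau))) (pss hs))).
  rewrite mulmxBr; move: (E m q *m _) (E m q *m _) => A1 A2.
  by apply/matrixP => i i'; rewrite !mxE; ring.
rewrite normrZ (ger0_norm b0).
apply: (le_trans (y := b * (eps / (b + 1)))).
  by apply: ler_wpM2l => //; exact: le_trans (E_norm_le _) HD.
rewrite mulrA ler_pdivrMr; last lra.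
nra.
Qed.

Lemma regF : exists C : R, forall j (t : R) u, (1 <= j <= k)%N -> setT t -> Oy u ->
  forall hs, size hs = j -> all_adm (phase tau) hs -> all_unit (supn tau) hs ->
    `|DF DP j t u hs| <= C.
Proof.
have [Cb HCb] := DPbnd.
exists ((Lp ^+ 2 / 4) / HT * ((\sum_(i < k.+1) w ^- i) / wt * `|Cb| + 1)).
move=> j t u hj _ [pu Xu] hs hsz hadm hunit.
have j0 : (0 < j)%N by case/andP: hj.
have psz : size (pss hs) = j by rewrite size_map.
have HC := HCb j 0 _ hj I Xu _ psz (fun _ _ => I) (pss_unit _ hadm hunit).
rewrite /DF normrZ.
apply: ler_pM; [exact: normr_ge0|exact: normr_ge0|exact: a_abs|].
apply: le_trans (Z_bnd _ _ _ (u (- tau)) _ j0 hadm hunit HC) _.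
rewrite lerD2r; apply: ler_wpM2r; first exact: normr_ge0.
apply: ler_wpM2r; first by rewrite invr_ge0 ltW.
have jlt : (j < k.+1)%N by case/andP: hj.
rewrite (bigD1 (Ordinal jlt)) //= lerDl.
apply: sumr_ge0 => i _; rewrite invr_ge0; apply: exprn_ge0; exact: ltW.
Qed.


Lemma C0kb_F : C0kb (phase tau) (supn tau) k setT Oy Fv.
Proof.
split; first exact: regA.
exists (DF DP).
split; first exact: regB.
split; first exact: regC.
split; first exact: regD.
split; first exact: regE.
exact: regF.
Qed.

End Reg.


Lemma main_sec (k : nat) :
  (k = 0%N -> {within X, continuous Psi}) ->
  ((0 < k)%N -> Ckb k X Psi) ->
  exists (Oy : set (R -> 'cV[R]_(maxn n q)))
         (F : R -> (R -> 'cV[R]_(maxn n q)) -> 'cV[R]_(maxn n q))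
         (W : 'M[R]_(maxn n q, n)) (b : 'cV[R]_(maxn n q))
         (Wt : 'M[R]_(q, maxn n q)) (bt : 'cV[R]_q)
         (Phi : 'cV[R]_n -> 'cV[R]_q),
    is_NDDE k tau T X setT Oy F W b Wt bt Phi /\
    (forall x, X x -> Phi x = Psi x) /\
    (forall t x1 x2, X x1 -> X x2 ->
       `|F t (cst (W *m x1 + b)) - F t (cst (W *m x2 + b))|
         <= K * supn tau (cst (W *m x1 + b) - cst (W *m x2 + b))) /\
    induced_norm_is W w /\ induced_norm_is Wt wt.
Proof.
move=> hk0 hk1.
exists Oy, Fv, Wm, 0, Wtm, 0, Psi.
split; last first.
  split; first by [].
  split; first by move=> t x1 x2 X1 X2; exact: Lip_F.
  by split; [exact: normW|exact: normWt].
rewrite /is_NDDE /=.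
split; first exact: openT.
split; first exact: Oy_open.
split; first by [].
split; first exact: Oy_cst.
split.
  move=> x Xx; split; first exact: exist_sol.
  split.
    move=> c1 c2 y1 y2 s1 s2 s hs hs1 hs2.
    case: (leP s 0) => h.
      have hs' : - tau <= s <= 0 by rewrite hs h.
      move: s1 s2 => [_ [_ [i1 _]]] [_ [_ [i2 _]]].
      by have := i1 s hs'; have := i2 s hs'; rewrite add0r => -> ->.
    rewrite (sol_eq _ _ _ s1 s) ?(sol_eq _ _ _ s2 s) //; apply/andP; split => //; exact: ltW.
  move=> c y Tc sol.
  rewrite (sol_eq _ _ _ sol T); last by rewrite Tc andbT; apply: le_trans tauT; exact: ltW.
  by rewrite Phi_eq.
case: k hk0 hk1 => [|k'] hk0 hk1; first exact: hk0.
have [contPsi [DP [DP0 [DPml [DPder [DPcont DPbnd]]]]]] := hk1 erefl.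
exact: (C0kb_F k'.+1 DP contPsi DP0 DPml DPder DPcont DPbnd).
Qed.

End M.

Theorem mainTheorem3 (R : realType) (k n q : nat) (T : R)
  (X : set 'cV[R]_n) (Psi : 'cV[R]_n -> 'cV[R]_q) (KPsi K tau w wt : R) :
  (0 < n)%N -> (0 < q)%N -> open X ->
  (k = 0%N -> {within X, continuous Psi}) ->
  ((0 < k)%N -> Ckb k X Psi) ->
  0 <= KPsi ->
  (forall x1 x2, X x1 -> X x2 -> `|Psi x1 - Psi x2| <= KPsi * `|x1 - x2|) ->
  0 <= K -> 0 < tau -> tau <= T -> 0 < w -> 0 < wt ->
  2 * (1 + KPsi / (w * wt)) <= K * tau ->
  exists (Oy : set (R -> 'cV[R]_(maxn n q)))
         (F : R -> (R -> 'cV[R]_(maxn n q)) -> 'cV[R]_(maxn n q))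
         (W : 'M[R]_(maxn n q, n)) (b : 'cV[R]_(maxn n q))
         (Wt : 'M[R]_(q, maxn n q)) (bt : 'cV[R]_q)
         (Phi : 'cV[R]_n -> 'cV[R]_q),
    is_NDDE k tau T X setT Oy F W b Wt bt Phi /\
    (forall x, X x -> Phi x = Psi x) /\
    (forall t x1 x2, X x1 -> X x2 ->
       `|F t (cst (W *m x1 + b)) - F t (cst (W *m x2 + b))|
         <= K * supn tau (cst (W *m x1 + b) - cst (W *m x2 + b))) /\
    induced_norm_is W w /\ induced_norm_is Wt wt.
Proof.
Proof.
move=> n0 q0 oX hk0 hk1 KPsi0 LipPsi K0 tau0 tauT w0 wt0 Kc.
exact: (main_sec _ _ _ _ _ _ _ _ _ _ _ n0 q0 oX KPsi0 LipPsi K0 tau0 tauT w0 wt0 Kc _ hk0 hk1).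
Qed.
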